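(* Let $\Gamma$ be a distance-regular graph with diameter $D\ge3$ and valency $k$. Let $\theta,\theta'$ be real numbers other than $k$ that form a tight pair. Then $$\Bigl(\theta+\frac{k}{a_1+1}\Bigr)\Bigl(\theta'+\frac{k}{a_1+1}\Bigr)=-\frac{k a_1 b_1}{(a_1+1)^2}.$$
   Context: $\Gamma$ is a finite connected undirected graph without loops or multiple edges, distance-regular with diameter $D$, intersection numbers $a_i,b_i,c_i$ ($c_0=0$, $b_D=0$), valency $k$, $c_i+a_i+b_i=k$. For $\theta\in\mathbb{R}$ the pseudo cosine sequence for $\theta$ is the sequence of reals $\sigma_0,\dots,\sigma_D$ with $\sigma_0=1$ and $c_i\sigma_{i-1}+a_i\sigma_i+b_i\sigma_{i+1}=\theta\sigma_i$ for $0\le i\le D-1$. Pseudo cosine sequences $\sigma_i$, $\rho_i$ form a tight pair if $(\sigma_i\rho_i)_{i=0}^D$ is a pseudo cosine sequence; reals $\theta,\theta'$ form a tight pair if their pseudo cosine sequences do. *)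

(* Defs.v *)
From HB Require Import structures.
From mathcomp Require Import all_boot all_order all_algebra.
Set Implicit Arguments. Unset Strict Implicit. Unset Printing Implicit Defensive.
Import Order.TTheory GRing.Theory Num.Theory.

(* A simple graph: vertex set a finType T, adjacency e : rel T
   (assumed symmetric and irreflexive in [is_drg]). *)

Fixpoint within (T : finType) (e : rel T) (n : nat) (x y : T) : bool :=
  if n is n'.+1 then within e n' x y || [exists z, within e n' x z && e z y]
  else x == y.

(* path-length distance (for a connected graph every distance is < #|T|) *)
Definition dist (T : finType) (e : rel T) (x y : T) : nat :=
  find (fun n => within e n x y) (iota 0 #|T|.+1).

Definition diameter (T : finType) (e : rel T) : nat :=
  \max_(x : T) \max_(y : T) dist e x y.

Definition is_drg (T : finType) (e : rel T) (a b c : nat -> nat) : Prop :=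
  [/\ symmetric e, irreflexive e, (forall x y : T, connect e x y) &
   [/\
      (forall x y : T, 0 < dist e x y ->
         #|[set z | e y z & dist e x z == (dist e x y).-1]| = c (dist e x y)),
      (forall x y : T,
         #|[set z | e y z & dist e x z == dist e x y]| = a (dist e x y)),
      (forall x y : T,
         #|[set z | e y z & dist e x z == (dist e x y).+1]| = b (dist e x y))
    & c 0 = 0 /\ b (diameter e) = 0]].

Local Open Scope ring_scope.

(* sigma is the pseudo cosine sequence for theta (only sigma_0..sigma_D
   matter): sigma_0 = 1 and
   c_i sigma_{i-1} + a_i sigma_i + b_i sigma_{i+1} = theta sigma_i, 0<=i<=D-1.
   (For i = 0 the first term vanishes since c_0 = 0.) *)
Definition pseudo_cosine (R : realFieldType) (a b c : nat -> nat) (D : nat)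
  (theta : R) (sigma : nat -> R) : Prop :=
  sigma 0%N = 1 /\
  forall i : nat, (i < D)%N ->
    (c i)%:R * sigma i.-1 + (a i)%:R * sigma i + (b i)%:R * sigma i.+1
      = theta * sigma i.

Definition tight_pair_seq (R : realFieldType) (a b c : nat -> nat) (D : nat)
  (sigma rho : nat -> R) : Prop :=
  exists eta : R, pseudo_cosine a b c D eta (fun i => sigma i * rho i).

(* reals theta, theta' form a tight pair if their pseudo cosine sequences do
   (pseudo cosine sequences are unique since b_i <> 0 for i < D) *)
Definition tight_pair (R : realFieldType) (a b c : nat -> nat) (D : nat)
  (theta theta' : R) : Prop :=
  exists sigma rho : nat -> R,
    [/\ pseudo_cosine a b c D theta sigma, pseudo_cosine a b c D theta' rho
      & tight_pair_seq a b c D sigma rho].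

(* Main.v *)
Require Import Defs.
From mathcomp Require Import all_boot all_order all_algebra ring.
Import Order.TTheory GRing.Theory Num.Theory.
Set Implicit Arguments.
Section G.
Context {T : finType} {e : rel T}.

Lemma dist_self x : dist e x x = 0%N.
Proof. by rewrite /dist /= eqxx. Qed.

Lemma dist0 x z : dist e x z = 0%N -> z = x.
Proof.
rewrite /dist /=; case: ifP => [/eqP -> //|]; by [].
Qed.

Lemma within1 x z : e x z -> within e 1 x z.
Proof. by move=> exz; apply/orP; right; apply/existsP; exists x; rewrite eqxx. Qed.

Lemma dist_adj x z : x != z -> e x z -> dist e x z = 1%N.
Proof.
move=> nxz exz; have : (0 < #|T|)%N by apply/card_gt0P; exists x.
rewrite /dist; case: #|T| => [//|n] _; cbn [find iota].
have -> : within e 0 x z = false by exact: negbTE.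
by rewrite within1.
Qed.

Lemma dist_le2 x y z : x != y -> e x y -> e y z -> (dist e x z <= 2)%N.
Proof.
move=> nxy exy eyz.
have : (1 < #|T|)%N.
  by rewrite (cardD1 x) (cardD1 y) !inE eq_sym nxy.
rewrite /dist; case: #|T| => [//|[//|n]] _; cbn [find iota].
have -> : within e 2 x z.
  apply/orP; right; apply/existsP; exists y; rewrite eyz andbT; exact: within1.
by case: ifP => // _; case: ifP.
Qed.

End G.
Arguments dist_adj {T e x z}.
Arguments dist_le2 {T e x y z}.
Arguments dist0 {T e x z}.
Lemma card_sum (T : finType) (P : pred T) : #|[set x | P x]| = (\sum_x (P x : nat))%N.
Proof. by rewrite -sum1dep_card big_mkcond; apply: eq_bigr => i _; case: (P i). Qed.

Lemma drg_facts (T : finType) (e : rel T) (a b c : nat -> nat) :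
  is_drg e a b c -> (3 <= diameter e)%N ->
  [/\ a 0%N = 0%N, c 1%N = 1%N, (0 < b 0%N)%N & b 0%N = (c 1 + a 1 + b 1)%N].
Proof.
case=> esym eirr econn [Hc Ha Hb [c0 bD]] Hdiam.
have [x [y Hxy]] : exists x y, (3 <= dist e x y)%N.
  case: (boolP [exists x, exists y, 3 <= dist e x y]).
    by move/existsP=> [x /existsP [y H]]; exists x, y.
  move/negP=> H; exfalso; move: Hdiam; apply/negP; rewrite -ltnNge ltnS.
  apply/bigmax_leqP => x _; apply/bigmax_leqP => y _; rewrite leqNgt; apply/negP => H'.
  by apply: H; apply/existsP; exists x; apply/existsP; exists y.
have nxy : x != y by apply/eqP => E; rewrite E dist_self in Hxy.
have [z exz] : exists z, e x z.
  move: (econn x y) => /connectP [[|z p] /= Hp Ey]; first by rewrite Ey eqxx in nxy.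
  by exists z; case/andP: Hp.
have nxz : x != z by apply/eqP => E; rewrite E (eirr z) in exz.
have dxz := dist_adj nxz exz.
have a0 : a 0%N = 0%N.
  have := Ha x x; rewrite dist_self => <-; apply: eq_card0 => w.
  rewrite !inE; apply/negbTE/negP => /andP [exw /eqP /dist0 E].
  by rewrite E eirr in exw.
have c1 : c 1%N = 1%N.
  have := Hc x z; rewrite dxz => <- //=; rewrite -(cards1 x); apply: eq_card => w.
  rewrite !inE; apply/idP/idP => [/andP [_ /eqP /dist0 ->] //|/eqP ->].
  by rewrite esym exz dist_self.
have bk : b 0%N = #|[set w | e z w]|.
  have := Hb z z; rewrite dist_self => <-; apply: eq_card => w; rewrite !inE.
  case ezw: (e z w) => //=; rewrite dist_adj //.
  by apply/eqP => E; rewrite E eirr in ezw.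
split => //.
  rewrite bk; apply/card_gt0P; exists x; by rewrite inE esym.
have := Hc x z; have := Ha x z; have := Hb x z; rewrite dxz /= => <- <- <- //; rewrite bk.
rewrite !card_sum -!big_split /=; apply: eq_bigr => w _.
case ezw: (e z w) => //=.
have := dist_le2 nxz exz ezw.
by case: (dist e x w) => [|[|[|m]]].
Qed.
Local Open Scope ring_scope.

Theorem lemma4p4 (T : finType) (e : rel T) (a b c : nat -> nat)
  (R : realFieldType) (theta theta' : R) :
  is_drg e a b c ->
  (3 <= diameter e)%N ->
  theta != (b 0%N)%:R -> theta' != (b 0%N)%:R ->
  tight_pair a b c (diameter e) theta theta' ->
  (theta + (b 0%N)%:R / ((a 1%N)%:R + 1)) * (theta' + (b 0%N)%:R / ((a 1%N)%:R + 1))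
    = - ((b 0%N)%:R * (a 1%N)%:R * (b 1%N)%:R) / ((a 1%N)%:R + 1) ^+ 2.
Proof.
move=> Hg HD nt nt' [sg [rh [[s0 Hs] [r0 Hr] [eta [t0 Ht]]]]].
have [a0 c1 kpos kE] := @drg_facts _ _ _ _ _ Hg HD.
have c0 : c 0%N = 0%N by case: Hg => _ _ _ [_ _ _ []].
have lt0 : (0 < diameter e)%N by apply: leq_trans HD.
have lt1 : (1 < diameter e)%N by apply: leq_trans HD.
move: (Hs 0%N lt0) (Hs 1%N lt1) (Hr 0%N lt0) (Hr 1%N lt1) (Ht 0%N lt0) (Ht 1%N lt1).
rewrite /= a0 c0 c1 s0 r0 !mul0r !add0r mulr1 !mul1r.
set k := (b 0%N)%:R; set A := (a 1%N)%:R; set B := (b 1%N)%:R.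
have hB : B = k - A - 1 by rewrite /B /k kE c1 !natrD /A; ring.
have k0 : k != 0 by rewrite /k pnatr_eq0 -lt0n.
have A0 : A + 1 != 0 by rewrite /A -[1]/(1%:R) -natrD pnatr_eq0 addn1.
move: (sg 1%N) (rh 1%N) (sg 2%N) (rh 2%N) => s1 r1 s2 r2.
move=> e1 e2 e3 e4 e5 e6.
rewrite !mulr1 in e3 e5.
rewrite -e1 in e2 nt *; rewrite -e3 in e4 nt' *; rewrite -e5 in e6.
have ns1 : s1 - 1 != 0.
  by rewrite subr_eq0; apply: contraNneq nt => ->; rewrite mulr1.
have nr1 : r1 - 1 != 0.
  by rewrite subr_eq0; apply: contraNneq nt' => ->; rewrite mulr1.
have hX : B * s2 = k * s1 * s1 - 1 - A * s1.
  by transitivity ((1 + A * s1 + B * s2) - (1 + A * s1)); [ring | rewrite e2; ring].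
have hY : B * r2 = k * r1 * r1 - 1 - A * r1.
  by transitivity ((1 + A * r1 + B * r2) - (1 + A * r1)); [ring | rewrite e4; ring].
have P : B + A * B * (s1 * r1) + (B * s2) * (B * r2) - k * (s1 * r1) * B * (s1 * r1) = 0.
  have -> : B + A * B * (s1 * r1) + (B * s2) * (B * r2) - k * (s1 * r1) * B * (s1 * r1)
    = B * ((1 + A * (s1 * r1) + B * (s2 * r2)) - k * (s1 * r1) * (s1 * r1)) by ring.
  by rewrite e6 subrr mulr0.
rewrite hX hY hB in P.
set F := ((A + 1) * (k * s1) + k) * ((A + 1) * (k * r1) + k) + k * A * (k - A - 1).
have HF : F = 0.
  have : (s1 - 1) * (r1 - 1) * F = 0.
    rewrite -[RHS](mulr0 ((A + 1) * k)) -P /F; ring.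
  by move/eqP; rewrite !mulf_eq0 (negbTE ns1) (negbTE nr1) /= => /eqP.
apply/eqP; rewrite -subr_eq0; apply/eqP.
have -> : (k * s1 + k / (A + 1)) * (k * r1 + k / (A + 1)) - - (k * A * B) / (A + 1) ^+ 2
  = F / (A + 1) ^+ 2 by rewrite /F hB; field.
by rewrite HF mul0r.
Qed.
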